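(* Any DRSL formula $\psi$ can be represented equivalently by a formula in the form $\#^1_{s_1}\phi_1\wedge...\wedge \#^k_{s_k}\phi_k$, where $\phi_1,...,\phi_n\in\mathcal{L}^{\mathrel{|}\!\sim}$.
   Context: DRSL formulas are given by $\psi::=\phi\mid\#_s\psi\mid\psi\wedge\psi$ with $\#\in\{\Box,\Diamond\}$, $s$ a standpoint symbol (including the universal standpoint $*$), and $\phi\in\mathcal{L}^{\mathrel{|}\!\sim}$, the propositional KLM language $\phi::=\alpha\mid\alpha\mathrel{|}\!\sim\beta\mid\phi\wedge\phi$ ($\alpha,\beta$ Boolean). Equivalence is with respect to ranked standpoint structures $M=(\Pi,\sigma,\gamma)$ (precisifications $\Pi$; $\sigma$ assigning each standpoint a nonempty set of precisifications with $\sigma( * )=\Pi$; $\gamma$ assigning each precisification a ranked interpretation), where $M,\pi\Vdash\phi$ iff $\gamma(\pi)\Vdash\phi$, $\Box_s$/$\Diamond_s$ quantify universally/existentially over $\sigma(s)$, conjunction is componentwise, and $M\Vdash\psi$ iff $\psi$ holds at all precisifications. Each $\#^i\in\{\Box,\Diamond\}$. *)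

(* Defs.v *)
From mathcomp Require Import all_boot.
Set Implicit Arguments.
Unset Strict Implicit.
Unset Printing Implicit Defensive.

Section Syntax.
Variable Atom : finType.

Inductive bform : Type :=
| BTop | BBot
| BAtom of Atom
| BNot of bform
| BAnd of bform & bform
| BOr of bform & bform
| BImp of bform & bform.

Inductive kform : Type :=
| KBool of bform
| KCond of bform & bform
| KAnd of kform & kform.

Variable Stp : Type.
Inductive stp : Type := Univ | Sym of Stp.

Inductive modality : Type := MBox | MDia.

Inductive dform : Type :=
| DKLM of kform
| DMod of modality & stp & dform
| DAnd of dform & dform.

Definition nf_atom (t : modality * stp * kform) : dform :=
  let: (m, s, f) := t in DMod m s (DKLM f).

Definition nf_formula (h : modality * stp * kform) (tl : seq (modality * stp * kform)) : dform :=
  foldl (fun acc t => DAnd acc (nf_atom t)) (nf_atom h) tl.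
End Syntax.

Arguments Univ {Stp}.

Section Semantics.
Variable Atom : finType.
Variable Stp : Type.

Definition valuation := Atom -> bool.

Fixpoint bsat (u : valuation) (a : bform Atom) : bool :=
  match a with
  | BTop => true
  | BBot => false
  | BAtom p => u p
  | BNot b => ~~ bsat u b
  | BAnd b c => bsat u b && bsat u c
  | BOr b c => bsat u b || bsat u c
  | BImp b c => bsat u b ==> bsat u c
  end.

(* A ranked interpretation: R : U -> N \cup {oo} (None = oo) with convexity:
   if R(u) = i then for every j < i some u' has R(u') = j. *)
Record ranked_interp : Type := RankedInterp {
  rank : valuation -> option nat;
  rank_convex : forall u i j, rank u = Some i -> j < i -> exists u', rank u' = Some j
}.

Definition alpha_world (R : ranked_interp) (a : bform Atom) (u : valuation) : Prop :=
  exists i, rank R u = Some i /\ bsat u a.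

Definition min_alpha_world (R : ranked_interp) (a : bform Atom) (u : valuation) : Prop :=
  exists i, rank R u = Some i /\ bsat u a /\
    forall v j, rank R v = Some j -> bsat v a -> i <= j.

Fixpoint ksat (R : ranked_interp) (f : kform Atom) : Prop :=
  match f with
  | KBool a => forall u, (exists i, rank R u = Some i) -> bsat u a
  | KCond a b => forall u, min_alpha_world R a u -> bsat u b
  | KAnd f g => ksat R f /\ ksat R g
  end.

Record rstructure : Type := RStructure {
  Prec : Type;
  sigma : stp Stp -> Prec -> Prop;
  sigma_nonempty : forall s, exists pi, sigma s pi;
  sigma_univ : forall pi, sigma Univ pi;
  gamma : Prec -> ranked_interp
}.

Fixpoint dsat (M : rstructure) (pi : Prec M) (psi : dform Atom Stp) {struct psi} : Prop :=
  match psi with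
  | DKLM f => ksat (gamma pi) f
  | DMod MBox s p => forall pi', sigma s pi' -> @dsat M pi' p
  | DMod MDia s p => exists pi', sigma s pi' /\ @dsat M pi' p
  | DAnd p q => @dsat M pi p /\ @dsat M pi q
  end.

Definition models (M : rstructure) (psi : dform Atom Stp) : Prop :=
  forall pi : Prec M, @dsat M pi psi.

Definition dequiv (psi psi' : dform Atom Stp) : Prop :=
  forall M : rstructure, models M psi <-> models M psi'.
End Semantics.

(* Main.v *)
Require Import Defs.
From mathcomp Require Import all_boot.

Section NF.
Variable Atom : finType.
Variable Stp : Type.

Fixpoint dnorm (psi : dform Atom Stp) : kform Atom * seq (modality * stp Stp * kform Atom) :=
  match psi with
  | DKLM f => (f, [::])
  | DMod m s p => (KBool (BTop Atom), (m, s, (dnorm p).1) :: (dnorm p).2)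
  | DAnd p q => (KAnd (dnorm p).1 (dnorm q).1, (dnorm p).2 ++ (dnorm q).2)
  end.

Definition atom_sat (M : rstructure Atom Stp) (t : modality * stp Stp * kform Atom) : Prop :=
  match t with
  | (MBox, s, f) => forall pi' : Prec M, sigma s pi' -> ksat (gamma pi') f
  | (MDia, s, f) => exists pi' : Prec M, sigma s pi' /\ ksat (gamma pi') f
  end.

Fixpoint all_sat M (l : seq (modality * stp Stp * kform Atom)) : Prop :=
  match l with
  | [::] => True
  | t :: l' => atom_sat M t /\ all_sat M l'
  end.

Lemma all_sat_cat M l1 l2 : all_sat M (l1 ++ l2) <-> all_sat M l1 /\ all_sat M l2.
Proof. elim: l1 => [|t l IH] /=; [tauto| move: IH; tauto]. Qed.

Lemma atom_dsat M (pi : Prec M) t : dsat pi (nf_atom t) <-> atom_sat M t.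
Proof. case: t => [[m s] f]; case: m => /=; tauto. Qed.

Lemma dnorm_ok M psi : forall pi : Prec M,
  dsat pi psi <-> ksat (gamma pi) (dnorm psi).1 /\ all_sat M (dnorm psi).2.
Proof.
elim: psi => [f|m s p IH|p IHp q IHq] pi /=.
- tauto.
- have top : forall R, ksat R (KBool (BTop Atom)) by move=> R u _.
  case: m => /=; split.
  + move=> H; split => //; split.
    * by move=> pi' Hs; case: (IH pi') => H1 _; case: (H1 (H pi' Hs)).
    * case: (sigma_nonempty M s) => pi0 Hs.
      by case: (IH pi0) => H1 _; case: (H1 (H pi0 Hs)).
  + move=> [_ [H1 H2]] pi' Hs; apply/IH; split => //; exact: H1.
  + move=> [pi' [Hs H]]; split => //; case: (IH pi') => H1 _; case: (H1 H) => A B.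
    split => //; by exists pi'.
  + move=> [_ [[pi' [Hs H1]] H2]]; exists pi'; split => //; apply/IH; tauto.
- move: (all_sat_cat M (dnorm p).2 (dnorm q).2) (IHp pi) (IHq pi); tauto.
Qed.

Lemma foldl_ok M (pi : Prec M) acc tl :
  dsat pi (foldl (fun acc t => DAnd acc (nf_atom t)) acc tl) <-> dsat pi acc /\ all_sat M tl.
Proof.
elim: tl acc => [|t tl IH] acc /=; first tauto.
move: (IH (DAnd acc (nf_atom t))) (atom_dsat M pi t) => /=; tauto.
Qed.

End NF.
Arguments dnorm {Atom Stp} psi.
Arguments dnorm_ok {Atom Stp} M psi pi.
Arguments foldl_ok {Atom Stp} M pi acc tl.
Arguments atom_dsat {Atom Stp} M pi t.
Arguments all_sat_cat {Atom Stp} M l1 l2.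

Theorem corollary1 (Atom : finType) (Stp : Type) (psi : dform Atom Stp) :
  exists (h : modality * stp Stp * kform Atom) (tl : seq (modality * stp Stp * kform Atom)),
    dequiv psi (nf_formula h tl).
Proof.
exists (MBox, Univ, (dnorm psi).1), (dnorm psi).2 => M.
rewrite /models /nf_formula; split.
- move=> H pi; apply/(foldl_ok M); split.
  + apply/(atom_dsat M) => pi' _; by case: (proj1 (dnorm_ok M psi pi') (H pi')).
  + by case: (sigma_nonempty M Univ) => pi0 _; case: (proj1 (dnorm_ok M psi pi0) (H pi0)).
- move=> H pi; apply/dnorm_ok; case: (proj1 (foldl_ok M _ _ _) (H pi)) => A B.
  split => //; exact: (proj1 (atom_dsat M _ _) A pi (sigma_univ pi)).
Qed.
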